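(* A group $H$ is generically embeddable if and only if $H$ is countable and every finitely generated subgroup of $H$ is generically embeddable.
   Context: Let $\mathbb N=\{1,2,3,\dots\}$. Equip $\mathbb N^{\mathbb N\times\mathbb N}$ with the product topology of the discrete topology on $\mathbb N$. Let $\mathcal G$ be the subspace consisting of those $A\in\mathbb N^{\mathbb N\times\mathbb N}$ that are the multiplication table of a group on the underlying set $\mathbb N$ whose identity element is $1$. For $G\in\mathcal G$, $\overline G$ denotes the group on $\mathbb N$ with multiplication table $G$. For a group $H$, $\mathcal E_H=\{G\in\mathcal G:\ H\text{ is embeddable into }\overline G\}$; $H$ is generically embeddable if $\mathcal E_H$ is comeager in $\mathcal G$. *)

(* Defs.v *)
From Stdlib Require Import List ProofIrrelevance.
Import ListNotations.
Set Implicit Arguments.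

Record Group := {
  carrier :> Type;
  gmul : carrier -> carrier -> carrier;
  gone : carrier;
  ginv : carrier -> carrier;
  gassoc : forall x y z, gmul (gmul x y) z = gmul x (gmul y z);
  gmul1l : forall x, gmul gone x = x;
  gmul1r : forall x, gmul x gone = x;
  gmulVl : forall x, gmul (ginv x) x = gone;
  gmulVr : forall x, gmul x (ginv x) = gone
}.

Definition countable_group (H : Group) : Prop :=
  exists f : H -> nat, forall x y, f x = f y -> x = y.

Inductive gen (H : Group) (s : list H) : H -> Prop :=
| gen_in : forall x, In x s -> gen H s x
| gen_one : gen H s (gone H)
| gen_mul : forall x y, gen H s x -> gen H s y -> gen H s (gmul H x y)
| gen_inv : forall x, gen H s x -> gen H s (ginv H x).
Arguments gen {H} s _.
Arguments gen_one {H} s.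

Section FG.
Variables (H : Group) (s : list H).
Definition fg_carrier := {x : H | gen s x}.
Definition fg_mul (a b : fg_carrier) : fg_carrier :=
  exist _ (gmul H (proj1_sig a) (proj1_sig b))
    (gen_mul (proj2_sig a) (proj2_sig b)).
Definition fg_one : fg_carrier := exist _ (gone H) (gen_one s).
Definition fg_inv (a : fg_carrier) : fg_carrier :=
  exist _ (ginv H (proj1_sig a)) (gen_inv (proj2_sig a)).
Lemma fg_eq (a b : fg_carrier) : proj1_sig a = proj1_sig b -> a = b.
Proof. destruct a, b; simpl; intros ->. f_equal. apply proof_irrelevance. Qed.
Lemma fg_assoc a b c : fg_mul (fg_mul a b) c = fg_mul a (fg_mul b c).
Proof. apply fg_eq; simpl; apply gassoc. Qed.
Lemma fg_1l a : fg_mul fg_one a = a. Proof. apply fg_eq; simpl; apply gmul1l. Qed.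
Lemma fg_1r a : fg_mul a fg_one = a. Proof. apply fg_eq; simpl; apply gmul1r. Qed.
Lemma fg_Vl a : fg_mul (fg_inv a) a = fg_one. Proof. apply fg_eq; simpl; apply gmulVl. Qed.
Lemma fg_Vr a : fg_mul a (fg_inv a) = fg_one. Proof. apply fg_eq; simpl; apply gmulVr. Qed.
End FG.

Definition fg_subgroup (H : Group) (s : list H) : Group :=
  {| carrier := @fg_carrier H s; gmul := @fg_mul H s; gone := @fg_one H s;
     ginv := @fg_inv H s; gassoc := @fg_assoc H s; gmul1l := @fg_1l H s;
     gmul1r := @fg_1r H s; gmulVl := @fg_Vl H s; gmulVr := @fg_Vr H s |}.

(** * The space of group multiplication tables on N.
    The paper's N = {1,2,3,...} with identity 1 is relabelled as Stdlib
    [nat] = {0,1,2,...} via n |-> n-1, so the identity element is 0. *)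
Definition table := nat -> nat -> nat.

Definition is_group_table (A : table) : Prop :=
  (forall x y z, A (A x y) z = A x (A y z)) /\
  (forall x, A 0 x = x /\ A x 0 = x) /\
  (forall x, exists y, A x y = 0 /\ A y x = 0).

(** Product topology of discrete nat on nat^(nat x nat): basic neighbourhoods
    of A are the sets of B agreeing with A on a finite list of positions. *)
Definition agree_on (l : list (nat * nat)) (A B : table) : Prop :=
  forall p, In p l -> A (fst p) (snd p) = B (fst p) (snd p).

(** Open subsets of the subspace G (sets D contained in G that are open in
    the subspace topology). *)
Definition G_open (D : table -> Prop) : Prop :=
  (forall A, D A -> is_group_table A) /\
  (forall A, D A -> exists l, forall B, is_group_table B -> agree_on l A B -> D B).

Definition G_dense (D : table -> Prop) : Prop :=
  forall A l, is_group_table A ->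
    exists B, is_group_table B /\ agree_on l A B /\ D B.

Definition G_comeager (E : table -> Prop) : Prop :=
  exists D : nat -> (table -> Prop),
    (forall n, G_open (D n) /\ G_dense (D n)) /\
    (forall A, is_group_table A -> (forall n, D n A) -> E A).

Definition embeds (H : Group) (A : table) : Prop :=
  exists f : H -> nat,
    (forall x y, f x = f y -> x = y) /\
    (forall x y, f (gmul H x y) = A (f x) (f y)).

Definition E_ (H : Group) (A : table) : Prop :=
  is_group_table A /\ embeds H A.

Definition generically_embeddable (H : Group) : Prop := G_comeager (E_ H).

(* Main.v *)
Require Import Defs.
From Stdlib Require Import List Arith Lia Classical ClassicalEpsilon FunctionalExtensionality ProofIrrelevance Cantor FinFun.
Import ListNotations.


Section GL.
Variable G : Group.
Lemma g_cancel_l (a x y : G) : gmul G a x = gmul G a y -> x = y.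
Proof. intros h. rewrite <- (gmul1l G x), <- (gmul1l G y), <- (gmulVl G a), !gassoc, h. reflexivity. Qed.
Lemma g_cancel_r (a x y : G) : gmul G x a = gmul G y a -> x = y.
Proof. intros h. rewrite <- (gmul1r G x), <- (gmul1r G y), <- (gmulVr G a), <- !gassoc, h. reflexivity. Qed.
Lemma g_inv_unique (x y : G) : gmul G x y = gone G -> y = ginv G x.
Proof. intros h. apply (g_cancel_l x). rewrite h, gmulVr. reflexivity. Qed.
Lemma g_idem (x : G) : gmul G x x = x -> x = gone G.
Proof. intros h. apply (g_cancel_l x). rewrite h, gmul1r. reflexivity. Qed.
Lemma g_eq_of_div (x y : G) : gmul G x (ginv G y) = gone G -> x = y.
Proof. intros h. rewrite <- (gmul1r G x), <- (gmulVl G y), <- gassoc, h, gmul1l. reflexivity. Qed.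
Lemma g_div_of_eq (x : G) : gmul G x (ginv G x) = gone G.
Proof. apply gmulVr. Qed.
End GL.

Section Hom.
Variables (G1 G2 : Group) (f : G1 -> G2).
Hypothesis hf : forall x y, f (gmul G1 x y) = gmul G2 (f x) (f y).
Lemma hom_one : f (gone G1) = gone G2.
Proof. apply g_idem. rewrite <- hf, gmul1l. reflexivity. Qed.
Lemma hom_inv x : f (ginv G1 x) = ginv G2 (f x).
Proof. apply g_inv_unique. rewrite <- hf, gmulVr. apply hom_one. Qed.
End Hom.

Inductive word := WVar (i : nat) | WOne | WMul (a b : word) | WInv (a : word).

Fixpoint ev {X : Type} (m : X -> X -> X) (o : X) (iv : X -> X) (v : nat -> X) (w : word) : X :=
  match w with
  | WVar i => v i
  | WOne => o
  | WMul a b => m (ev m o iv v a) (ev m o iv v b)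
  | WInv a => iv (ev m o iv v a)
  end.

Definition evG (G : Group) (v : nat -> G) (w : word) : G := ev (gmul G) (gone G) (ginv G) v w.

Lemma ev_ext {X} m o iv (v v' : nat -> X) w : (forall i, v i = v' i) -> ev m o iv v w = ev m o iv v' w.
Proof. intros h; induction w; simpl; congruence. Qed.

Lemma hom_ev (G1 G2 : Group) (f : G1 -> G2) (hf : forall x y, f (gmul G1 x y) = gmul G2 (f x) (f y)) v w :
  f (evG G1 v w) = evG G2 (fun i => f (v i)) w.
Proof.
  induction w; unfold evG in *; simpl.
  - reflexivity.
  - apply hom_one; auto.
  - rewrite hf, IHw1, IHw2; reflexivity.
  - rewrite hom_inv, IHw; auto.
Qed.

Definition tinv (A : table) (x : nat) : nat :=
  epsilon (inhabits 0) (fun y => A x y = 0 /\ A y x = 0).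

Lemma tinv_spec A : is_group_table A -> forall x, A x (tinv A x) = 0 /\ A (tinv A x) x = 0.
Proof.
  intros [_ [_ hi]] x. unfold tinv. apply (epsilon_spec (inhabits 0) (fun y => A x y = 0 /\ A y x = 0)). apply hi.
Qed.

Section TG.
Variables (A : table) (HA : is_group_table A).
Lemma tg_assoc x y z : A (A x y) z = A x (A y z). Proof. apply HA. Qed.
Lemma tg_1l x : A 0 x = x. Proof. apply HA. Qed.
Lemma tg_1r x : A x 0 = x. Proof. apply HA. Qed.
Lemma tg_Vl x : A (tinv A x) x = 0. Proof. apply tinv_spec; auto. Qed.
Lemma tg_Vr x : A x (tinv A x) = 0. Proof. apply tinv_spec; auto. Qed.
Definition tgroup : Group := {| carrier := nat; gmul := A; gone := 0; ginv := tinv A; gassoc := tg_assoc; gmul1l := tg_1l; gmul1r := tg_1r; gmulVl := tg_Vl; gmulVr := tg_Vr |}.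
End TG.

Definition evT (A : table) (v : nat -> nat) (w : word) : nat := ev A 0 (tinv A) v w.

Lemma evT_evG A HA v w : evT A v w = evG (tgroup A HA) v w.
Proof. reflexivity. Qed.


Lemma agree_app l1 l2 A B : agree_on (l1 ++ l2) A B <-> agree_on l1 A B /\ agree_on l2 A B.
Proof.
  unfold agree_on; split.
  - intros h; split; intros p hp; apply h; apply in_or_app; auto.
  - intros [h1 h2] p hp; apply in_app_or in hp; destruct hp; auto.
Qed.

Lemma agree_incl l1 l2 A B : incl l1 l2 -> agree_on l2 A B -> agree_on l1 A B.
Proof. unfold agree_on; auto. Qed.

Lemma tinv_unique A (HA : is_group_table A) x y : A x y = 0 -> y = tinv A x.
Proof. intros h. exact (g_inv_unique (tgroup A HA) x y h). Qed.

Fixpoint supp (A : table) (v : nat -> nat) (w : word) : list (nat * nat) :=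
  match w with
  | WVar _ | WOne => []
  | WMul a b => supp A v a ++ supp A v b ++ [(evT A v a, evT A v b)]
  | WInv a => supp A v a ++ [(evT A v a, tinv A (evT A v a))]
  end.

Lemma ev_local A B v w : is_group_table A -> is_group_table B ->
  agree_on (supp A v w) A B -> evT B v w = evT A v w.
Proof.
  intros HA HB. induction w; simpl; intros h; try reflexivity.
  - apply agree_app in h as [h1 h].
    apply agree_app in h as [h2 h3].
    unfold evT in *; simpl. rewrite IHw1, IHw2 by auto.
    symmetry. apply (h3 (_, _)). simpl; auto.
  - apply agree_app in h as [h1 h2].
    unfold evT in *; simpl. rewrite IHw by auto.
    symmetry. apply tinv_unique; auto.
    specialize (h2 (_, _) (or_introl eq_refl)). simpl in h2. rewrite <- h2. apply tinv_spec; auto.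
Qed.

Lemma comeager_mono (E1 E2 : table -> Prop) :
  (forall A, is_group_table A -> E1 A -> E2 A) -> G_comeager E1 -> G_comeager E2.
Proof. intros h [D [h1 h2]]. exists D. split; auto. Qed.

Lemma dense_open_comeager D : G_open D -> G_dense D -> G_comeager D.
Proof.
  intros ho hd. exists (fun _ => D). split; auto. intros A _ h. exact (h 0).
Qed.

Lemma comeager_countable (E : nat -> table -> Prop) :
  (forall k, G_comeager (E k)) -> G_comeager (fun A => forall k, E k A).
Proof.
  intros h.
  destruct (constructive_indefinite_description _
    (choice (fun k D => (forall n, G_open (D n) /\ G_dense (D n)) /\
                        (forall A, is_group_table A -> (forall n, D n A) -> E k A)) h)) as [F hF].
  exists (fun n => F (fst (of_nat n)) (snd (of_nat n))). split.
  - intros n. apply hF.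
  - intros A HA hn k. apply (proj2 (hF k)); auto. intros m.
    specialize (hn (to_nat (k, m))). rewrite cancel_of_to in hn. exact hn.
Qed.


Lemma lxor_group : is_group_table Nat.lxor.
Proof.
  split; [|split].
  - intros; apply Nat.lxor_assoc.
  - intros; split; [apply Nat.lxor_0_l | apply Nat.lxor_0_r].
  - intros x; exists x; rewrite Nat.lxor_nilpotent; auto.
Qed.

Definition grid (n : nat) : list (nat * nat) := list_prod (seq 0 (S n)) (seq 0 (S n)).
Lemma grid_in n x y : x <= n -> y <= n -> In (x, y) (grid n).
Proof. intros. unfold grid. apply in_prod; apply in_seq; lia. Qed.

Definition invpos (B : table) (n : nat) : list (nat * nat) :=
  flat_map (fun x => [(x, tinv B x); (tinv B x, x)]) (seq 0 (S n)).
Lemma invpos_in B n x : x <= n -> In (x, tinv B x) (invpos B n) /\ In (tinv B x, x) (invpos B n).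
Proof.
  intros. unfold invpos. split; apply in_flat_map; exists x; (split; [apply in_seq; lia | simpl; auto]).
Qed.

Section Baire.
Variable D : nat -> table -> Prop.
Hypothesis hD : forall n, G_open (D n) /\ G_dense (D n).

Definition stepR (n : nat) (p q : table * list (nat * nat)) : Prop :=
  is_group_table (fst p) ->
  is_group_table (fst q) /\ agree_on (snd p) (fst p) (fst q) /\ incl (snd p) (snd q) /\
  (forall C, is_group_table C -> agree_on (snd q) (fst q) C -> D n C) /\
  (forall x y, x <= n -> y <= n -> In (x, y) (snd q)) /\
  (forall x, x <= n -> In (x, tinv (fst q) x) (snd q) /\ In (tinv (fst q) x, x) (snd q)).

Lemma step_ex n p : exists q, stepR n p q.
Proof.
  destruct (classic (is_group_table (fst p))) as [Hp|Hp]; [|exists p; intros h; contradiction].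
  destruct (proj2 (hD n) (fst p) (snd p) Hp) as [B [HB [hag hDB]]].
  destruct (proj2 (proj1 (hD n)) B hDB) as [l hl].
  exists (B, snd p ++ l ++ grid n ++ invpos B n). intros _. cbn [fst snd].
  split; [auto|split; [auto|split; [|split; [|split]]]].
  - intros a ha. apply in_or_app; auto.
  - intros C HC h. apply hl; auto. apply agree_app in h as [_ h]. apply agree_app in h as [h _]. exact h.
  - intros x y hx hy. apply in_or_app; right; apply in_or_app; right; apply in_or_app; left. apply grid_in; auto.
  - intros x hx. split; do 3 (apply in_or_app; right); apply invpos_in; auto.
Qed.

Definition Fstep (n : nat) (p : table * list (nat * nat)) : table * list (nat * nat) :=
  proj1_sig (constructive_indefinite_description _ (step_ex n p)).
Lemma Fstep_spec n p : stepR n p (Fstep n p).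
Proof. unfold Fstep. destruct constructive_indefinite_description; auto. Qed.

Fixpoint S_ (n : nat) : table * list (nat * nat) :=
  match n with 0 => (Nat.lxor, []) | S m => Fstep m (S_ m) end.
Definition An n := fst (S_ n).
Definition Ln n := snd (S_ n).

Lemma An_group n : is_group_table (An n).
Proof. induction n. apply lxor_group. unfold An; simpl. apply Fstep_spec; auto. Qed.

Lemma An_step n : agree_on (Ln n) (An n) (An (S n)) /\ incl (Ln n) (Ln (S n)) /\
  (forall C, is_group_table C -> agree_on (Ln (S n)) (An (S n)) C -> D n C) /\
  (forall x y, x <= n -> y <= n -> In (x, y) (Ln (S n))) /\
  (forall x, x <= n -> In (x, tinv (An (S n)) x) (Ln (S n)) /\ In (tinv (An (S n)) x, x) (Ln (S n))).
Proof. pose proof (Fstep_spec n (S_ n) (An_group n)). unfold An, Ln; simpl. tauto. Qed.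

Lemma An_mono n m : n <= m -> incl (Ln n) (Ln m) /\ agree_on (Ln n) (An n) (An m).
Proof.
  induction 1.
  - split. apply incl_refl. intros p _; reflexivity.
  - destruct IHle as [h1 h2]. destruct (An_step m) as [a [b _]]. split.
    + eapply incl_tran; eauto.
    + intros p hp. rewrite h2 by auto. apply a. apply h1; auto.
Qed.

Lemma stab n m p : In p (Ln n) -> n <= m -> An m (fst p) (snd p) = An n (fst p) (snd p).
Proof. intros hp hm. symmetry. apply (proj2 (An_mono n m hm)); auto. Qed.

Definition Lim (x y : nat) : nat := An (S (max x y)) x y.

Lemma lim_eq x y m : S (max x y) <= m -> An m x y = Lim x y.
Proof.
  intros h. unfold Lim. apply (stab (S (max x y)) m (x, y)); auto.
  apply (proj1 (proj2 (proj2 (proj2 (An_step (max x y)))))); lia.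
Qed.

Lemma Lim_group : is_group_table Lim.
Proof.
  split; [|split].
  - intros x y z. set (m := S (x + y + z + Lim x y + Lim y z)).
    rewrite <- (lim_eq x y m), <- (lim_eq y z m) by (unfold m; lia).
    rewrite <- (lim_eq (An m x y) z m), <- (lim_eq x (An m y z) m)
      by (rewrite ?(lim_eq x y m), ?(lim_eq y z m) by (unfold m; lia); unfold m; lia).
    apply (An_group m).
  - intros x. split.
    + rewrite <- (lim_eq 0 x (S x)) by lia. apply (An_group _).
    + rewrite <- (lim_eq x 0 (S x)) by lia. apply (An_group _).
  - intros x. exists (tinv (An (S x)) x).
    set (y := tinv (An (S x)) x).
    destruct (proj2 (proj2 (proj2 (proj2 (An_step x)))) x (le_n _)) as [i1 i2].
    set (m := S (x + y)).
    rewrite <- (lim_eq x y (m + S x)), <- (lim_eq y x (m + S x)) by (unfold m; lia).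
    pose proof (stab (S x) (m + S x) (x, y) i1) as e1.
    pose proof (stab (S x) (m + S x) (y, x) i2) as e2. cbn [fst snd] in e1, e2.
    rewrite e1, e2 by lia.
    apply tinv_spec, An_group.
Qed.

Lemma Lim_D n : D n Lim.
Proof.
  destruct (An_step n) as [_ [_ [h _]]]. apply h. apply Lim_group.
  intros [x y] hp. simpl. set (m := S (x + y + n)).
  rewrite <- (lim_eq x y m) by (unfold m; lia).
  symmetry. apply (stab (S n) m (x, y)); auto. unfold m; lia.
Qed.
End Baire.

Lemma comeager_nonempty E : G_comeager E -> exists A, is_group_table A /\ E A.
Proof.
  intros [D [hD hE]]. exists (Lim D hD). split. apply Lim_group. apply hE. apply Lim_group.
  intros n. apply Lim_D.
Qed.


Lemma least_ex (P : nat -> Prop) : (exists n, P n) -> exists n, P n /\ forall m, P m -> n <= m.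
Proof.
  intros [n hn]. induction n as [n IH] using lt_wf_ind.
  destruct (classic (exists m, m < n /\ P m)) as [[m [hm hPm]]|hno].
  - apply (IH m hm hPm).
  - exists n. split; auto. intros m hm. destruct (le_lt_dec n m); auto. exfalso; eauto.
Qed.

Lemma greatest_ex (P : nat -> Prop) n : (exists s, s < n /\ P s) ->
  exists s, s < n /\ P s /\ forall s', s' < n -> P s' -> s' <= s.
Proof.
  induction n; intros [s [hs hP]]; [lia|].
  destruct (classic (P n)) as [hn|hn].
  - exists n. split; [lia|split; auto]. intros; lia.
  - assert (s < n) by (destruct (Nat.eq_dec s n); subst; [contradiction|lia]).
    destruct IHn as [t [ht [hPt hmax]]]; [exists s; auto|].
    exists t. split; [lia|split; auto]. intros s' hs' hP'.
    destruct (Nat.eq_dec s' n); [subst; contradiction|]. apply hmax; auto; lia.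
Qed.

Lemma inj_unbounded (f : nat -> nat) : (forall a b, f a = f b -> a = b) -> forall m, exists n, m <= f n.
Proof.
  intros hf m. apply NNPP. intros hno.
  assert (hlt : forall n, f n < m) by (intros n; destruct (le_lt_dec m (f n)); auto; exfalso; eauto).
  assert (NoDup (map f (seq 0 (S m)))).
  { apply Injective_map_NoDup. intros a b; apply hf. apply seq_NoDup. }
  assert (incl (map f (seq 0 (S m))) (seq 0 m)).
  { intros y hy. apply in_map_iff in hy as [x [<- _]]. apply in_seq. specialize (hlt x). lia. }
  pose proof (NoDup_incl_length H H0). rewrite length_map, !length_seq in H1. lia.
Qed.

Section CB.
Variables (X : Type) (e : X -> nat) (i : nat -> X).
Hypothesis he : forall x y, e x = e y -> x = y.
Hypothesis hi : forall a b, i a = i b -> a = b.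

Definition SS n := exists x, e x = n.

Lemma SS_unb m : exists n, m <= n /\ SS n.
Proof.
  destruct (inj_unbounded (fun n => e (i n))) with (m := m) as [n hn].
  - intros a b h. apply hi, he, h.
  - exists (e (i n)). split; auto. exists (i n); auto.
Qed.

Definition nxt (m : nat) : nat :=
  epsilon (inhabits 0) (fun n => (m <= n /\ SS n) /\ forall k, m <= k /\ SS k -> n <= k).
Lemma nxt_spec m : (m <= nxt m /\ SS (nxt m)) /\ forall k, m <= k /\ SS k -> nxt m <= k.
Proof.
  unfold nxt. apply (epsilon_spec (inhabits 0) (fun n => (m <= n /\ SS n) /\ forall k, m <= k /\ SS k -> n <= k)).
  apply least_ex. destruct (SS_unb m) as [n hn]; eauto.
Qed.

Fixpoint enum (k : nat) : nat := match k with 0 => nxt 0 | S k => nxt (S (enum k)) end.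

Lemma enum_SS k : SS (enum k).
Proof. destruct k; simpl; apply nxt_spec. Qed.
Lemma enum_lt k : enum k < enum (S k).
Proof. simpl. pose proof (nxt_spec (S (enum k))). lia. Qed.
Lemma enum_mono a b : a < b -> enum a < enum b.
Proof.
  induction 1. apply enum_lt. pose proof (enum_lt m). lia.
Qed.
Lemma enum_inj a b : enum a = enum b -> a = b.
Proof.
  intros h. destruct (lt_eq_lt_dec a b) as [[l|l]|l]; auto;
  apply enum_mono in l; lia.
Qed.

Lemma enum_surj n : SS n -> exists k, enum k = n.
Proof.
  induction n as [n IH] using lt_wf_ind. intros hn.
  destruct (classic (exists s, s < n /\ SS s)) as [hex|hno].
  - destruct (greatest_ex SS n hex) as [s [hs [hSs hmax]]].
    destruct (IH s hs hSs) as [k hk]. exists (S k). simpl. rewrite hk.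
    destruct (nxt_spec (S s)) as [[h1 h2] h3].
    specialize (h3 n). assert (nxt (S s) <= n) by (apply h3; split; auto; lia).
    destruct (le_lt_dec n (nxt (S s))); [lia|].
    specialize (hmax (nxt (S s)) l h2). lia.
  - exists 0. simpl. destruct (nxt_spec 0) as [[h1 h2] h3].
    assert (nxt 0 <= n) by (apply h3; split; auto; lia).
    destruct (le_lt_dec n (nxt 0)); [lia|]. exfalso; eauto.
Qed.

Definition toN (x : X) : nat := epsilon (inhabits 0) (fun k => enum k = e x).
Definition ofN (k : nat) : X := epsilon (inhabits (i 0)) (fun x => e x = enum k).

Lemma toN_spec x : enum (toN x) = e x.
Proof. unfold toN. apply (epsilon_spec (inhabits 0) (fun k => enum k = e x)). apply enum_surj. exists x; auto. Qed.
Lemma ofN_spec k : e (ofN k) = enum k.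
Proof. unfold ofN. apply (epsilon_spec (inhabits (i 0)) (fun x => e x = enum k)). apply enum_SS. Qed.

Lemma ofN_toN x : ofN (toN x) = x.
Proof. apply he. rewrite ofN_spec, toN_spec. reflexivity. Qed.
Lemma toN_ofN k : toN (ofN k) = k.
Proof. apply enum_inj. rewrite toN_spec, ofN_spec. reflexivity. Qed.
End CB.

Lemma count_bij (X : Type) (e : X -> nat) (i : nat -> X) :
  (forall x y, e x = e y -> x = y) -> (forall a b, i a = i b -> a = b) ->
  exists (f : X -> nat) (g : nat -> X), (forall x, g (f x) = x) /\ (forall n, f (g n) = n).
Proof.
  intros he hi. exists (toN X e), (ofN X e i). split.
  apply ofN_toN; auto. intros; apply toN_ofN; auto.
Qed.


Definition swp (a b n : nat) : nat := if Nat.eqb n a then b else if Nat.eqb n b then a else n.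
Lemma swp_invol a b n : swp a b (swp a b n) = n.
Proof. unfold swp. destruct (Nat.eqb_spec n a) as [e|e].
  - destruct (Nat.eqb_spec b a) as [e2|e2]; [lia|].
    rewrite Nat.eqb_refl. lia.
  - destruct (Nat.eqb_spec n b) as [e'|e'].
    + rewrite Nat.eqb_refl. lia.
    + destruct (Nat.eqb_spec n a); [lia|]. destruct (Nat.eqb_spec n b); [lia|]. auto.
Qed.

Section Relabel.
Variables (Gm : Group) (X : Type) (iota : X -> Gm) (hiota : forall a b, iota a = iota b -> a = b).

Lemma fix_list (f : Gm -> nat) (g : nat -> Gm) (k : X -> nat) :
  (forall x, g (f x) = x) -> (forall n, f (g n) = n) ->
  forall F : list X, (forall a b, In a F -> In b F -> k a = k b -> a = b) ->
  exists (psi : Gm -> nat) (chi : nat -> Gm), (forall x, chi (psi x) = x) /\ (forall n, psi (chi n) = n) /\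
    (forall a, In a F -> psi (iota a) = k a).
Proof.
  intros hgf hfg F. induction F as [|a F IH]; intros hk.
  - exists f, g. repeat split; auto. intros a [].
  - destruct IH as [psi [chi [h1 [h2 h3]]]]. { intros; apply hk; simpl; auto. }
    destruct (classic (In a F)) as [ha|ha].
    + exists psi, chi. repeat split; auto. intros b [<-|hb]; auto.
    + set (c := psi (iota a)).
      exists (fun x => swp c (k a) (psi x)), (fun n => chi (swp c (k a) n)). repeat split.
      * intros x. rewrite swp_invol. auto.
      * intros n. rewrite h2. apply swp_invol.
      * intros b [<-|hb].
        -- unfold swp, c. rewrite Nat.eqb_refl. reflexivity.
        -- rewrite h3 by auto. unfold swp.
           destruct (Nat.eqb_spec (k b) c) as [e|e].
           ++ exfalso. unfold c in e. rewrite <- h3 in e by auto.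
              apply (f_equal chi) in e. rewrite !h1 in e. apply hiota in e. subst; contradiction.
           ++ destruct (Nat.eqb_spec (k b) (k a)) as [e'|e']; auto.
              exfalso. apply hk in e'; simpl; auto. subst; contradiction.
Qed.
End Relabel.

Section Transport.
Variables (Gm : Group) (psi : Gm -> nat) (chi : nat -> Gm).
Hypotheses (h1 : forall x, chi (psi x) = x) (h2 : forall n, psi (chi n) = n) (h0 : psi (gone Gm) = 0).
Definition trans_table : table := fun u v => psi (gmul Gm (chi u) (chi v)).
Lemma chi0 : chi 0 = gone Gm. Proof. rewrite <- h0. apply h1. Qed.
Lemma trans_group : is_group_table trans_table.
Proof.
  unfold trans_table. split; [|split].
  - intros. rewrite !h1, gassoc. reflexivity.
  - intros x. rewrite chi0, gmul1l, gmul1r, h2. auto.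
  - intros x. exists (psi (ginv Gm (chi x))). rewrite h1, gmulVl, gmulVr, h0. auto.
Qed.
Lemma trans_mul x y : trans_table (psi x) (psi y) = psi (gmul Gm x y).
Proof. unfold trans_table. rewrite !h1. reflexivity. Qed.
End Transport.

Definition Fl (A : table) (l : list (nat * nat)) : list nat :=
  flat_map (fun p => [fst p; snd p; A (fst p) (snd p)]) l.

Lemma relabel (Gm : Group) (cd : Gm -> nat) (hcd : forall x y, cd x = cd y -> x = y)
  (A : table) (HA : is_group_table A) (iota : nat -> Gm) (hiota : forall a b, iota a = iota b -> a = b)
  (hhom : forall x y, iota (A x y) = gmul Gm (iota x) (iota y)) (l : list (nat * nat)) (F : list nat) :
  exists B : table, is_group_table B /\ agree_on l A B /\
    exists psi : Gm -> nat, (forall a, In a F -> psi (iota a) = a) /\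
      (forall x y, B (psi x) (psi y) = psi (gmul Gm x y)).
Proof.
  destruct (count_bij Gm cd iota hcd hiota) as [f [g [hgf hfg]]].
  destruct (fix_list Gm nat iota hiota f g (fun a => a) hgf hfg (0 :: F ++ Fl A l)) as [psi [chi [h1 [h2 h3]]]].
  { intros; auto. }
  assert (h0 : psi (gone Gm) = 0).
  { rewrite <- (hom_one (tgroup A HA) Gm iota hhom). apply h3. simpl; auto. }
  exists (trans_table Gm psi chi). split; [apply trans_group; auto|split].
  - intros [a b] hp. simpl.
    assert (hin : In a (Fl A l) /\ In b (Fl A l) /\ In (A a b) (Fl A l)).
    { unfold Fl. repeat split; apply in_flat_map; exists (a, b); simpl; auto. }
    destruct hin as [ia [ib iab]].
    assert (ea : psi (iota a) = a) by (apply h3; simpl; right; apply in_or_app; auto).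
    assert (eb : psi (iota b) = b) by (apply h3; simpl; right; apply in_or_app; auto).
    assert (eab : psi (iota (A a b)) = A a b) by (apply h3; simpl; right; apply in_or_app; auto).
    transitivity (psi (iota (A a b))); [symmetry; exact eab|].
    rewrite hhom, <- (trans_mul Gm psi chi h1), ea, eb. reflexivity.
  - exists psi. split.
    + intros a ha. apply h3. simpl; right; apply in_or_app; auto.
    + intros. apply trans_mul; auto.
Qed.


Lemma g_inv_mul (G : Group) (x y : G) : ginv G (gmul G x y) = gmul G (ginv G y) (ginv G x).
Proof.
  symmetry. apply g_inv_unique. rewrite gassoc, <- (gassoc G y), gmulVr, gmul1l, gmulVr. reflexivity.
Qed.

Section HNN.
Variables (A : table) (HA : is_group_table A).
Let Gt := tgroup A HA.
Let as_ x y z : A (A x y) z = A x (A y z) := tg_assoc A HA x y z.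
Let l1 x : A 0 x = x := tg_1l A HA x.
Let r1 x : A x 0 = x := tg_1r A HA x.
Let vl x : A (tinv A x) x = 0 := tg_Vl A HA x.
Let vr x : A x (tinv A x) = 0 := tg_Vr A HA x.
Lemma tinv_mul x y : tinv A (A x y) = A (tinv A y) (tinv A x).
Proof. exact (g_inv_mul Gt x y). Qed.
Lemma div_eq x y : A x (tinv A y) = 0 <-> x = y.
Proof. split. apply (g_eq_of_div Gt). intros ->; apply vr. Qed.

Definition inK (v : nat -> nat) (k : nat) : Prop := exists w, evT A v w = k.
Lemma inK_mul v a b : inK v a -> inK v b -> inK v (A a b).
Proof. intros [w1 <-] [w2 <-]. exists (WMul w1 w2). reflexivity. Qed.
Lemma inK_inv v a : inK v a -> inK v (tinv A a).
Proof. intros [w1 <-]. exists (WInv w1). reflexivity. Qed.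
Lemma inK_one v : inK v 0.
Proof. exists WOne. reflexivity. Qed.
Lemma inK_var v i : inK v (v i).
Proof. exists (WVar i). reflexivity. Qed.

Definition Iso (v v' : nat -> nat) := forall w, evT A v w = 0 <-> evT A v' w = 0.
Lemma Iso_sym v v' : Iso v v' -> Iso v' v.
Proof. intros h w. symmetry; apply h. Qed.
Lemma Iso_eq v v' : Iso v v' -> forall w1 w2, evT A v w1 = evT A v w2 <-> evT A v' w1 = evT A v' w2.
Proof.
  intros h w1 w2. pose proof (h (WMul w1 (WInv w2))) as e. unfold evT in e; simpl in e.
  rewrite !div_eq in e. exact e.
Qed.

Definition wch (v : nat -> nat) (k : nat) : word := epsilon (inhabits WOne) (fun w => evT A v w = k).
Lemma wch_spec v k : inK v k -> evT A v (wch v k) = k.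
Proof. intros h. unfold wch. apply (epsilon_spec (inhabits WOne) (fun w => evT A v w = k)). exact h. Qed.
Definition phi (v v' : nat -> nat) (k : nat) : nat := evT A v' (wch v k).

Section Phi.
Variables (v v' : nat -> nat) (hI : Iso v v').
Lemma phi_ev w : phi v v' (evT A v w) = evT A v' w.
Proof. unfold phi. apply (Iso_eq v v' hI). apply wch_spec. exists w; auto. Qed.
Lemma phi_inK k : inK v' (phi v v' k).
Proof. exists (wch v k). reflexivity. Qed.
Lemma phi_mul a b : inK v a -> inK v b -> phi v v' (A a b) = A (phi v v' a) (phi v v' b).
Proof. intros [w1 <-] [w2 <-]. rewrite !phi_ev. change (A (evT A v w1) (evT A v w2)) with (evT A v (WMul w1 w2)).
  rewrite phi_ev. reflexivity. Qed.
End Phi.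
Lemma phi_back v v' (hI : Iso v v') k : inK v k -> phi v' v (phi v v' k) = k.
Proof. intros [w <-]. rewrite phi_ev by auto. apply phi_ev. apply Iso_sym; auto. Qed.

Definition cos (v : nat -> nat) (x y : nat) : Prop := exists k, inK v k /\ y = A k x.
Definition rep (v : nat -> nat) (x : nat) : nat :=
  epsilon (inhabits 0) (fun y => cos v x y /\ forall z, cos v x z -> y <= z).
Lemma rep_spec v x : cos v x (rep v x) /\ forall z, cos v x z -> rep v x <= z.
Proof.
  unfold rep. apply (epsilon_spec (inhabits 0) (fun y => cos v x y /\ forall z, cos v x z -> y <= z)).
  apply least_ex. exists x. exists 0. split. apply inK_one. rewrite l1; auto.
Qed.
Lemma cos_shift v k x y : inK v k -> (cos v (A k x) y <-> cos v x y).
Proof.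
  intros hk. split.
  - intros [k' [hk' ->]]. exists (A k' k). split. apply inK_mul; auto. rewrite as_; auto.
  - intros [k' [hk' ->]]. exists (A k' (tinv A k)). split. apply inK_mul; auto. apply inK_inv; auto.
    rewrite as_, <- (as_ (tinv A k)), vl, l1. reflexivity.
Qed.
Lemma rep_coset v k x : inK v k -> rep v (A k x) = rep v x.
Proof.
  intros hk. destruct (rep_spec v x) as [a1 a2]. destruct (rep_spec v (A k x)) as [b1 b2].
  apply Nat.le_antisymm.
  - apply b2. apply cos_shift; auto.
  - apply a2. apply (cos_shift v k); auto.
Qed.
Lemma rep_le v x : rep v x <= x.
Proof. apply rep_spec. exists 0. split. apply inK_one. rewrite l1; auto. Qed.
Lemma rep_rep v x : rep v (rep v x) = rep v x.
Proof. destruct (rep_spec v x) as [[k [hk e]] _]. rewrite e at 1. apply rep_coset; auto. Qed.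

Definition kk (v : nat -> nat) (x : nat) : nat := A x (tinv A (rep v x)).
Lemma kk_inK v x : inK v (kk v x).
Proof.
  destruct (rep_spec v x) as [[k [hk e]] _]. unfold kk. rewrite e, tinv_mul, <- as_, vr, l1.
  apply inK_inv; auto.
Qed.
Lemma kk_rep v x : A (kk v x) (rep v x) = x.
Proof. unfold kk. rewrite as_, vl, r1. reflexivity. Qed.
Lemma kk_coset v k x : inK v k -> kk v (A k x) = A k (kk v x).
Proof. intros hk. unfold kk. rewrite rep_coset, as_ by auto. reflexivity. Qed.
Lemma kk_of_rep v r : rep v r = r -> forall k, inK v k -> kk v (A k r) = k.
Proof. intros hr k hk. rewrite kk_coset by auto. unfold kk. rewrite hr, vr, r1. reflexivity. Qed.

Definition M (v : nat -> nat) := {p : nat * nat | rep v (fst p) = fst p}.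
Definition mkM (v : nat -> nat) (x n : nat) : M v := exist _ (rep v x, n) (rep_rep v x).
Lemma mkM_eq v x y n : rep v x = rep v y -> mkM v x n = mkM v y n.
Proof. intros h. unfold mkM. apply subset_eq_compat. rewrite h. reflexivity. Qed.
Lemma mkM_self v (q : M v) : mkM v (fst (proj1_sig q)) (snd (proj1_sig q)) = q.
Proof. destruct q as [[r m] h]. unfold mkM. apply subset_eq_compat. simpl in *. rewrite h. reflexivity. Qed.

Lemma M_bij v v' : exists (beta : M v -> M v') (beta' : M v' -> M v),
  (forall q, beta' (beta q) = q) /\ (forall q, beta (beta' q) = q).
Proof.
  assert (hc : forall u, exists (f : M u -> nat) (g : nat -> M u), (forall x, g (f x) = x) /\ (forall n, f (g n) = n)).
  { intros u. assert (h0 : rep u 0 = 0) by (pose proof (rep_le u 0); lia).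
    apply (count_bij (M u) (fun q => to_nat (proj1_sig q)) (fun n => exist _ (0, n) h0)).
    - intros [p1 h1] [p2 h2]. simpl. intros e. apply (f_equal of_nat) in e. rewrite !cancel_of_to in e.
      apply subset_eq_compat; auto.
    - intros a b e. inversion e; auto. }
  destruct (hc v) as [f1 [g1 [a1 b1]]]. destruct (hc v') as [f2 [g2 [a2 b2]]].
  exists (fun q => g2 (f1 q)), (fun q => g1 (f2 q)). split; intros q.
  - rewrite b2, a1; auto.
  - rewrite b1, a2; auto.
Qed.

Definition tmap (v v' : nat -> nat) (beta : M v -> M v') (p : nat * nat) : nat * nat :=
  let q := proj1_sig (beta (mkM v (fst p) (snd p))) in
  (A (phi v v' (kk v (fst p))) (fst q), snd q).

Lemma tmap_back v v' (hI : Iso v v') beta beta' (hb : forall q, beta' (beta q) = q) p :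
  tmap v' v beta' (tmap v v' beta p) = p.
Proof.
  destruct p as [x n]. unfold tmap at 2. cbn [fst snd].
  set (q := beta (mkM v x n)).
  set (fk := phi v v' (kk v x)).
  assert (hfk : inK v' fk) by apply phi_inK.
  destruct q as [[r' m'] hr'] eqn:eq. cbn [fst snd proj1_sig] in *.
  unfold tmap. cbn [fst snd].
  assert (e1 : mkM v' (A fk r') m' = q).
  { rewrite eq. rewrite (mkM_eq v' (A fk r') r') by (apply rep_coset; auto).
    rewrite <- (mkM_self v' (exist _ (r', m') hr')). reflexivity. }
  rewrite e1. unfold q. rewrite hb. unfold mkM; cbn [fst snd proj1_sig].
  rewrite kk_of_rep by auto. unfold fk. rewrite phi_back by auto using kk_inK.
  rewrite kk_rep. reflexivity.
Qed.

Lemma tmap_equiv v v' (hI : Iso v v') beta k x n : inK v k ->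
  tmap v v' beta (A k x, n) = (A (phi v v' k) (fst (tmap v v' beta (x, n))), snd (tmap v v' beta (x, n))).
Proof.
  intros hk. unfold tmap. cbn [fst snd].
  rewrite (mkM_eq v (A k x) x) by (apply rep_coset; auto).
  rewrite kk_coset, phi_mul, as_ by auto using kk_inK. reflexivity.
Qed.
End HNN.


Inductive w2 := L2 (a : nat) | T2 | M2 (a b : w2) | I2 (a : w2).

Fixpoint enc (w : w2) : nat :=
  match w with
  | L2 a => to_nat (0, a)
  | T2 => to_nat (1, 0)
  | M2 a b => to_nat (2, to_nat (enc a, enc b))
  | I2 a => to_nat (3, enc a)
  end.

Lemma to_nat_inj p q : to_nat p = to_nat q -> p = q.
Proof. intros h. apply (f_equal of_nat) in h. rewrite !cancel_of_to in h. exact h. Qed.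

Lemma enc_inj w1 w2' : enc w1 = enc w2' -> w1 = w2'.
Proof.
  revert w2'. induction w1; destruct w2'; cbn [enc]; intros h; apply to_nat_inj in h; try discriminate.
  - apply (f_equal snd) in h; cbn [snd] in h; subst; auto.
  - reflexivity.
  - apply (f_equal snd) in h; cbn [snd] in h. apply to_nat_inj in h.
    pose proof (f_equal fst h) as h1; pose proof (f_equal snd h) as h2; cbn [fst snd] in h1, h2. f_equal; auto.
  - apply (f_equal snd) in h; cbn [snd] in h. f_equal; auto.
Qed.

Definition Om := (nat * nat)%type.
Definition perm2 := ((Om -> Om) * (Om -> Om))%type.

Section Gam.
Variables (A : table) (HA : is_group_table A) (v v' : nat -> nat) (hI : Iso A v v').
Variables (beta : M A v -> M A v') (beta' : M A v' -> M A v).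
Hypotheses (hb1 : forall q, beta' (beta q) = q) (hb2 : forall q, beta (beta' q) = q).

Definition Tm := tmap A HA v v' beta.
Definition Ti := tmap A HA v' v beta'.
Lemma Ti_Tm p : Ti (Tm p) = p. Proof. apply tmap_back; auto. Qed.
Lemma Tm_Ti p : Tm (Ti p) = p. Proof. apply tmap_back; auto. apply Iso_sym; auto. Qed.

Definition lm (a : nat) : Om -> Om := fun p => (A a (fst p), snd p).

Fixpoint ev2 (w : w2) : perm2 :=
  match w with
  | L2 a => (lm a, lm (tinv A a))
  | T2 => (Tm, Ti)
  | M2 a b => (fun p => fst (ev2 a) (fst (ev2 b) p), fun p => snd (ev2 b) (snd (ev2 a) p))
  | I2 a => (snd (ev2 a), fst (ev2 a))
  end.

Lemma ev2_inv w : forall p, fst (ev2 w) (snd (ev2 w) p) = p /\ snd (ev2 w) (fst (ev2 w) p) = p.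
Proof.
  induction w as [a| |wa IHa wb IHb|wa IHa]; intros p; simpl.
  - destruct p as [x n]; unfold lm; simpl.
    rewrite <- !(tg_assoc A HA), (tg_Vr A HA), (tg_Vl A HA), !(tg_1l A HA). auto.
  - split; [apply Tm_Ti | apply Ti_Tm].
  - destruct (IHb (snd (ev2 wa) p)) as [a1 _]. destruct (IHa p) as [b1 _].
    destruct (IHa (fst (ev2 wb) p)) as [_ c1]. destruct (IHb p) as [_ d1].
    rewrite a1, b1, c1, d1. auto.
  - destruct (IHa p). auto.
Qed.

Definition Gc := {q : perm2 | exists w, ev2 w = q}.

Lemma Gc_eq (q1 q2 : Gc) : (forall p, fst (proj1_sig q1) p = fst (proj1_sig q2) p) -> q1 = q2.
Proof.
  destruct q1 as [[f1 g1] [w1 e1]], q2 as [[f2 g2] [w2' e2]]. simpl. intros h.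
  assert (hf : f1 = f2) by (apply functional_extensionality; auto). subst f2.
  assert (i1 := ev2_inv w1). assert (i2 := ev2_inv w2'). rewrite e1 in i1. rewrite e2 in i2. simpl in i1, i2.
  assert (g1 = g2).
  { apply functional_extensionality. intros p.
    rewrite <- (proj2 (i2 (g1 p))). rewrite (proj1 (i1 p)). reflexivity. }
  subst g2. apply subset_eq_compat. reflexivity.
Qed.

Definition Gmul (a b : Gc) : Gc.
Proof.
  refine (exist _ (fun p => fst (proj1_sig a) (fst (proj1_sig b) p), fun p => snd (proj1_sig b) (snd (proj1_sig a) p)) _).
  destruct a as [qa [wa ea]], b as [qb [wb eb]]. exists (M2 wa wb). simpl. rewrite ea, eb. reflexivity.
Defined.
Definition Gone : Gc := exist _ (ev2 (L2 0)) (ex_intro _ (L2 0) eq_refl).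
Definition Ginv (a : Gc) : Gc.
Proof.
  refine (exist _ (snd (proj1_sig a), fst (proj1_sig a)) _).
  destruct a as [qa [wa ea]]. exists (I2 wa). simpl. rewrite ea. reflexivity.
Defined.

Lemma G_assoc x y z : Gmul (Gmul x y) z = Gmul x (Gmul y z).
Proof. apply Gc_eq. intros p. reflexivity. Qed.
Lemma G_1l x : Gmul Gone x = x.
Proof. apply Gc_eq. intros [a n]. simpl. unfold lm. simpl. rewrite (tg_1l A HA). destruct (fst (proj1_sig x) (a, n)); auto. Qed.
Lemma G_1r x : Gmul x Gone = x.
Proof. apply Gc_eq. intros [a n]. simpl. unfold lm. simpl. rewrite (tg_1l A HA). auto. Qed.
Lemma G_Vl x : Gmul (Ginv x) x = Gone.
Proof.
  apply Gc_eq. intros [a n]. destruct x as [q [w e]]. simpl. unfold lm; simpl. rewrite (tg_1l A HA).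
  pose proof (ev2_inv w (a, n)) as h. rewrite e in h. apply h.
Qed.
Lemma G_Vr x : Gmul x (Ginv x) = Gone.
Proof.
  apply Gc_eq. intros [a n]. destruct x as [q [w e]]. simpl. unfold lm; simpl. rewrite (tg_1l A HA).
  pose proof (ev2_inv w (a, n)) as h. rewrite e in h. apply h.
Qed.

Definition Gam : Group := {| carrier := Gc; gmul := Gmul; gone := Gone; ginv := Ginv;
  gassoc := G_assoc; gmul1l := G_1l; gmul1r := G_1r; gmulVl := G_Vl; gmulVr := G_Vr |}.

Definition rho (a : nat) : Gam := exist _ (ev2 (L2 a)) (ex_intro _ (L2 a) eq_refl).
Definition tG : Gam := exist _ (ev2 T2) (ex_intro _ T2 eq_refl).

Lemma rho_hom a b : rho (A a b) = gmul Gam (rho a) (rho b).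
Proof. apply Gc_eq. intros [x n]. simpl. unfold lm; simpl. rewrite (tg_assoc A HA). reflexivity. Qed.
Lemma rho_inj a b : rho a = rho b -> a = b.
Proof.
  intros h. apply (f_equal (fun q => fst (proj1_sig q) (0, 0))) in h. simpl in h. unfold lm in h. simpl in h.
  rewrite !(tg_1r A HA) in h. inversion h; auto.
Qed.
Lemma tG_rel i : gmul Gam tG (rho (v i)) = gmul Gam (rho (v' i)) tG.
Proof.
  apply Gc_eq. intros [x n]. simpl. unfold lm at 1 2. simpl. unfold Tm.
  rewrite tmap_equiv by (auto; apply inK_var).
  change (v i) with (evT A v (WVar i)). rewrite phi_ev by auto. reflexivity.
Qed.

Definition wch2 (q : Gam) : w2 := epsilon (inhabits T2) (fun w => ev2 w = proj1_sig q).
Lemma wch2_spec q : ev2 (wch2 q) = proj1_sig q.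
Proof. unfold wch2. apply (epsilon_spec (inhabits T2) (fun w => ev2 w = proj1_sig q)). apply (proj2_sig q). Qed.
Definition cdG (q : Gam) : nat := enc (wch2 q).
Lemma cdG_inj q1 q2 : cdG q1 = cdG q2 -> q1 = q2.
Proof.
  unfold cdG. intros h. apply enc_inj in h. destruct q1 as [a1 b1], q2 as [a2 b2].
  apply subset_eq_compat. pose proof (wch2_spec (exist _ a1 b1)) as e1. pose proof (wch2_spec (exist _ a2 b2)) as e2.
  simpl in e1, e2. rewrite <- e1, <- e2, h. reflexivity.
Qed.
End Gam.

Lemma hnn (A : table) (HA : is_group_table A) (v v' : nat -> nat) : Iso A v v' ->
  exists (Gm : Group) (cd : Gm -> nat) (iota : nat -> Gm) (t : Gm),
    (forall x y, cd x = cd y -> x = y) /\ (forall a b, iota a = iota b -> a = b) /\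
    (forall a b, iota (A a b) = gmul Gm (iota a) (iota b)) /\
    (forall i, gmul Gm t (iota (v i)) = gmul Gm (iota (v' i)) t).
Proof.
  intros hI. destruct (M_bij A HA v v') as [beta [beta' [hb1 hb2]]].
  exists (Gam A HA v v' hI beta beta' hb1 hb2), (cdG A HA v v' hI beta beta' hb1 hb2),
    (rho A HA v v' hI beta beta' hb1 hb2), (tG A HA v v' hI beta beta' hb1 hb2).
  split; [apply cdG_inj|split; [apply rho_inj|split; [apply rho_hom|apply tG_rel]]].
Qed.


Definition val (L : list nat) : nat -> nat := fun i => nth i L 0.
Definition Conj (N : nat) (g g' : nat -> nat) (A : table) : Prop :=
  exists t, forall i, i < N -> A t (g i) = A (g' i) t.
Definition Cset (L1 L2 : list nat) (A : table) : Prop :=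
  is_group_table A /\ (~ Iso A (val L1) (val L2) \/ Conj (length L1) (val L1) (val L2) A).

Lemma Cset_open L1 L2 : G_open (Cset L1 L2).
Proof.
  split. intros A h; apply h.
  intros A [HA [hn|[t ht]]].
  - apply not_all_ex_not in hn as [w hw].
    exists (supp A (val L1) w ++ supp A (val L2) w). intros B HB hag.
    apply agree_app in hag as [h1 h2]. split; auto. left. intros hI. apply hw.
    rewrite <- (ev_local A B (val L1) w), <- (ev_local A B (val L2) w); auto.
  - exists (flat_map (fun i => [(t, val L1 i); (val L2 i, t)]) (seq 0 (length L1))).
    intros B HB hag. split; auto. right. exists t. intros i hi.
    assert (hin : In i (seq 0 (length L1))) by (apply in_seq; lia).
    pose proof (hag (t, val L1 i)) as a1. pose proof (hag (val L2 i, t)) as a2. cbn [fst snd] in a1, a2.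
    rewrite <- a1, <- a2; [apply ht; auto| |]; apply in_flat_map; exists i; simpl; auto.
Qed.

Lemma Cset_dense L1 L2 : G_dense (Cset L1 L2).
Proof.
  intros A l HA.
  destruct (classic (Iso A (val L1) (val L2))) as [hI|hn].
  2:{ exists A. split; auto. split. intros p _; reflexivity. split; auto. }
  destruct (hnn A HA _ _ hI) as [Gm [cd [iota [t [hcd [hio [hhom hrel]]]]]]].
  destruct (relabel Gm cd hcd A HA iota hio hhom l (0 :: L1 ++ L2)) as [B [HB [hag [psi [hpsi hmul]]]]].
  exists B. split; auto. split; auto. split; auto. right. exists (psi t). intros i hi.
  assert (e1 : psi (iota (val L1 i)) = val L1 i).
  { apply hpsi. right. apply in_or_app. left. apply nth_In. auto. }
  assert (e2 : psi (iota (val L2 i)) = val L2 i).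
  { apply hpsi. unfold val. destruct (nth_in_or_default i L2 0) as [h|h].
    - right; apply in_or_app; auto.
    - rewrite h; left; auto. }
  rewrite <- e1 at 1. rewrite <- e2 at 1. rewrite !hmul, hrel. reflexivity.
Qed.

Fixpoint tup (k c : nat) : list nat :=
  match k with 0 => [] | S k' => fst (of_nat c) :: tup k' (snd (of_nat c)) end.
Definition ldec (n : nat) : list nat := tup (fst (of_nat n)) (snd (of_nat n)).
Lemma ldec_surj L : exists n, ldec n = L.
Proof.
  assert (h : exists c, tup (length L) c = L).
  { induction L as [|a L [c hc]]. exists 0; reflexivity.
    exists (to_nat (a, c)). cbn [tup length]. rewrite cancel_of_to. cbn [fst snd]. rewrite hc. reflexivity. }
  destruct h as [c hc]. exists (to_nat (length L, c)). unfold ldec. rewrite cancel_of_to. exact hc.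
Qed.

Lemma Call_comeager : G_comeager (fun A => forall L1 L2, Cset L1 L2 A).
Proof.
  eapply comeager_mono; [|apply (comeager_countable (fun k => Cset (ldec (fst (of_nat k))) (ldec (snd (of_nat k)))))].
  - intros A HA h L1 L2. destruct (ldec_surj L1) as [n1 <-]. destruct (ldec_surj L2) as [n2 <-].
    specialize (h (to_nat (n1, n2))). rewrite cancel_of_to in h. exact h.
  - intros k. apply dense_open_comeager. apply Cset_open. apply Cset_dense.
Qed.


Lemma comeager_and (E1 E2 : table -> Prop) : G_comeager E1 -> G_comeager E2 ->
  G_comeager (fun A => E1 A /\ E2 A).
Proof.
  intros h1 h2.
  eapply comeager_mono; [|apply (comeager_countable (fun k => match k with 0 => E1 | _ => E2 end))].
  - intros A _ h. exact (conj (h 0) (h 1)).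
  - intros [|k]; auto.
Qed.

Lemma fg_ev (H : Group) (s : list H) (u : nat -> fg_subgroup H s) w :
  proj1_sig (evG (fg_subgroup H s) u w) = evG H (fun i => proj1_sig (u i)) w.
Proof. unfold evG in *. induction w; simpl; auto; f_equal; [exact IHw1|exact IHw2|exact IHw]. Qed.

Lemma ev_one (G : Group) w : evG G (fun _ => gone G) w = gone G.
Proof.
  induction w; unfold evG in *; simpl; auto.
  - rewrite IHw1, IHw2. apply gmul1l.
  - rewrite IHw. symmetry. apply g_inv_unique. apply gmul1l.
Qed.

Fixpoint trw (k : nat) (w : word) : word :=
  match w with
  | WVar i => if i <? k then WVar i else WOne
  | WOne => WOne
  | WMul a b => WMul (trw k a) (trw k b)
  | WInv a => WInv (trw k a)
  end.
Lemma ev_trw {X} m (o : X) iv v k w : ev m o iv v (trw k w) = ev m o iv (fun i => if i <? k then v i else o) w.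
Proof. induction w; simpl; auto. destruct (i <? k); auto. rewrite IHw1, IHw2; auto. rewrite IHw; auto. Qed.

Section Main.
Variables (H : Group) (f : H -> nat) (hf : forall x y, f x = f y -> x = y).
Definition en (n : nat) : H := epsilon (inhabits (gone H)) (fun x => f x = n).
Lemma en_f x : en (f x) = x.
Proof. apply hf. unfold en. apply (epsilon_spec (inhabits (gone H)) (fun y => f y = f x)). exists x; auto. Qed.

Definition sl (k : nat) : list H := map en (seq 0 k).
Definition vH (k : nat) : nat -> H := fun i => nth i (sl k) (gone H).
Lemma vH_lt k i : i < k -> vH k i = en i.
Proof.
  intros hi. unfold vH, sl. rewrite (nth_indep _ (gone H) (en 0)) by (rewrite length_map, length_seq; auto).
  rewrite map_nth, seq_nth; auto.
Qed.
Lemma vH_ge k i : k <= i -> vH k i = gone H.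
Proof. intros hi. unfold vH. apply nth_overflow. unfold sl. rewrite length_map, length_seq; auto. Qed.

Definition Real (G : table) (k : nat) (L : list nat) : Prop :=
  forall w, evG H (vH k) w = gone H <-> evT G (val L) w = 0.

Variables (G : table) (HG : is_group_table G).
Let TG := tgroup G HG.

Lemma gen_nth (s : list H) i : gen s (nth i s (gone H)).
Proof. destruct (nth_in_or_default i s (gone H)) as [h|h]. apply gen_in; auto. rewrite h. apply gen_one. Qed.
Definition gsel (s : list H) (i : nat) : fg_subgroup H s := exist _ (nth i s (gone H)) (gen_nth s i).

Lemma real_of_embed k : embeds (fg_subgroup H (sl k)) G -> exists Y, length Y = k /\ Real G k Y.
Proof.
  intros [phi [hinj hhom]].
  assert (hh : forall x y, phi (gmul (fg_subgroup H (sl k)) x y) = gmul TG (phi x) (phi y)) by exact hhom.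
  assert (h1 : phi (gone (fg_subgroup H (sl k))) = 0) by exact (hom_one _ TG phi hh).
  exists (map (fun i => phi (gsel (sl k) i)) (seq 0 k)). split. rewrite length_map, length_seq; auto.
  intros w.
  assert (e : evT G (val (map (fun i => phi (gsel (sl k) i)) (seq 0 k))) w = phi (evG _ (gsel (sl k)) w)).
  { rewrite (hom_ev _ TG phi hh). rewrite evT_evG with (HA := HG). apply ev_ext. intros i. unfold val.
    destruct (le_lt_dec k i) as [hi|hi].
    - rewrite nth_overflow by (rewrite length_map, length_seq; auto). rewrite <- h1. f_equal.
      apply fg_eq. simpl. symmetry. apply nth_overflow. unfold sl; rewrite length_map, length_seq; auto.
    - rewrite (nth_indep _ 0 (phi (gsel (sl k) 0))) by (rewrite length_map, length_seq; auto).
      rewrite (map_nth (fun i => phi (gsel (sl k) i))), seq_nth; auto. }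
  rewrite e. rewrite <- h1. split.
  - intros hw. f_equal. apply fg_eq. rewrite fg_ev. simpl. exact hw.
  - intros hw. apply hinj in hw. apply (f_equal (@proj1_sig _ _)) in hw. rewrite fg_ev in hw. exact hw.
Qed.

Lemma real_trunc k Y : Real G (S k) Y -> Real G k (firstn k Y).
Proof.
  intros h w. specialize (h (trw k w)). unfold evG, evT in *. rewrite !ev_trw in h.
  rewrite (ev_ext _ _ _ (vH k) (fun i => if i <? k then vH (S k) i else gone H)).
  rewrite (ev_ext _ _ _ (val (firstn k Y)) (fun i => if i <? k then val Y i else 0)). exact h.
  - intros i. unfold val. rewrite nth_firstn. reflexivity.
  - intros i. destruct (Nat.ltb_spec i k). rewrite !vH_lt; auto. apply vH_ge; auto.
Qed.

Hypothesis hC : forall L1 L2, Cset L1 L2 G.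

Lemma real_ext k Lz Y : length Lz = k -> length Y = S k -> Real G k Lz -> Real G (S k) Y ->
  exists x, Real G (S k) (Lz ++ [x]).
Proof.
  intros hlz hly hR hRY.
  set (Yk := firstn k Y).
  assert (hYk : Real G k Yk) by (apply real_trunc; auto).
  assert (hlk : length Yk = k) by (unfold Yk; rewrite length_firstn; lia).
  destruct (hC Yk Lz) as [_ [hn|[t ht]]].
  { exfalso. apply hn. intros w. split; intros e; [apply hR, hYk, e | apply hYk, hR, e]. }
  rewrite hlk in ht.
  set (c := fun u => G (G t u) (tinv G t)).
  assert (chom : forall u v, c (G u v) = G (c u) (c v)).
  { intros u v. unfold c. change G with (gmul TG). rewrite !gassoc. f_equal. f_equal.
    rewrite <- (gassoc TG (ginv TG t)), gmulVl, gmul1l. reflexivity. }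
  assert (c0 : c 0 = 0) by (unfold c; rewrite (tg_1r G HG); apply (tg_Vr G HG)).
  assert (cinj : forall u v, c u = c v -> u = v).
  { intros u v e. unfold c in e. apply (g_cancel_r TG) in e. apply (g_cancel_l TG) in e. exact e. }
  assert (hz : forall i, i < k -> val Lz i = c (val Y i)).
  { intros i hi. specialize (ht i hi). unfold c.
    assert (val Yk i = val Y i) by (unfold val, Yk; rewrite nth_firstn; destruct (Nat.ltb_spec i k); lia || reflexivity).
    rewrite <- H0, ht. change G with (gmul TG). rewrite gassoc, gmulVr, gmul1r. reflexivity. }
  exists (c (val Y k)).
  assert (hv : forall i, val (Lz ++ [c (val Y k)]) i = c (val Y i)).
  { intros i. unfold val. destruct (lt_eq_lt_dec i k) as [[l|l]|l].
    - rewrite app_nth1 by lia. apply hz; auto.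
    - subst i. rewrite app_nth2 by lia. rewrite hlz, Nat.sub_diag. reflexivity.
    - rewrite nth_overflow by (rewrite length_app; simpl; lia).
      rewrite (nth_overflow Y) by lia. auto. }
  intros w.
  assert (ee : evT G (val (Lz ++ [c (val Y k)])) w = c (evT G (val Y) w)).
  { unfold evT. rewrite (ev_ext _ _ _ _ (fun i => c (val Y i)) w hv).
    exact (eq_sym (hom_ev TG TG c chom (val Y) w)). }
  rewrite ee. split; intros e.
  - apply hRY in e. rewrite e; auto.
  - apply hRY. apply cinj. rewrite e, c0. reflexivity.
Qed.
End Main.


Section Final.
Variables (H : Group) (f : H -> nat) (hf : forall x y, f x = f y -> x = y).
Variables (G : table) (HG : is_group_table G).
Hypothesis hC : forall L1 L2, Cset L1 L2 G.
Hypothesis hE : forall k, embeds (fg_subgroup H (sl H f k)) G.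

Definition Xf (k : nat) (Lz : list nat) : nat :=
  epsilon (inhabits 0) (fun x => Real H f G (S k) (Lz ++ [x])).
Fixpoint Zs (k : nat) : list nat := match k with 0 => [] | S k' => Zs k' ++ [Xf k' (Zs k')] end.

Lemma Zs_inv k : length (Zs k) = k /\ Real H f G k (Zs k).
Proof.
  induction k as [|k [hl hR]].
  - split; auto. intros w. unfold evG.
    rewrite (ev_ext _ _ _ (vH H f 0) (fun _ => gone H)) by (intros; apply vH_ge; lia).
    unfold evT. rewrite (ev_ext _ _ _ (val []) (fun _ => 0)) by (intros [|i]; reflexivity).
    pose proof (ev_one H w) as a. pose proof (ev_one (tgroup G HG) w) as b. unfold evG in a, b.
    simpl in b. split; auto.
  - simpl. split. rewrite length_app, hl; simpl; lia.
    destruct (real_of_embed H f G HG (S k) (hE (S k))) as [Y [hY hRY]].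
    destruct (real_ext H f hf G HG hC k (Zs k) Y hl hY hR hRY) as [x hx].
    unfold Xf. apply (epsilon_spec (inhabits 0) (fun x => Real H f G (S k) (Zs k ++ [x]))). eauto.
Qed.

Definition zz (i : nat) : nat := nth i (Zs (S i)) 0.
Lemma Zs_nth n i : i < n -> nth i (Zs n) 0 = zz i.
Proof.
  induction n; intros hi; [lia|]. unfold zz.
  destruct (Nat.eq_dec i n) as [->|ne]; auto.
  simpl. rewrite app_nth1 by (rewrite (proj1 (Zs_inv n)); lia). apply IHn. lia.
Qed.

Lemma final_embeds : embeds H G.
Proof.
  exists (fun x => zz (f x)). split.
  - intros x y e. set (a := f x) in *. set (b := f y) in *. set (n := S (a + b)).
    destruct (Zs_inv n) as [_ hR].
    specialize (hR (WMul (WVar a) (WInv (WVar b)))).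
    unfold evG, evT in hR. cbn [ev] in hR.
    rewrite !(vH_lt H f hf) in hR by (unfold n; lia). unfold val in hR. rewrite !Zs_nth in hR by (unfold n; lia).
    unfold a, b in hR. rewrite !(en_f H f hf) in hR.
    apply (g_eq_of_div H). apply hR. unfold a, b in e. rewrite e. apply (tg_Vr G HG).
  - intros x y. set (a := f x). set (b := f y). set (c := f (gmul H x y)). set (n := S (a + b + c)).
    destruct (Zs_inv n) as [_ hR].
    specialize (hR (WMul (WVar c) (WInv (WMul (WVar a) (WVar b))))).
    unfold evG, evT in hR. cbn [ev] in hR.
    rewrite !(vH_lt H f hf) in hR by (unfold n; lia). unfold val in hR. rewrite !Zs_nth in hR by (unfold n; lia).
    unfold a, b, c in hR. rewrite !(en_f H f hf) in hR.
    apply (div_eq G HG). apply hR. apply gmulVr.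
Qed.
End Final.

Theorem corollary7p3 (H : Group) :
  generically_embeddable H <->
  (countable_group H /\
   forall s : list H, generically_embeddable (@fg_subgroup H s)).
Proof.
  split.
  - intros hg. split.
    + destruct (comeager_nonempty _ hg) as [A [_ [_ [phi [hinj _]]]]]. exists phi; auto.
    + intros s. eapply comeager_mono; [|exact hg].
      intros A HA [_ [phi [hinj hhom]]]. split; auto.
      exists (fun x => phi (proj1_sig x)). split.
      * intros x y e. apply hinj in e. apply fg_eq; auto.
      * intros x y. apply hhom.
  - intros [[f hf] hs]. unfold generically_embeddable.
    eapply comeager_mono; [|apply (comeager_and _ _ (comeager_countable (fun k => E_ (fg_subgroup H (sl H f k))) (fun k => hs _)) Call_comeager)].
    intros A HA [h1 h2]. split; auto. apply (final_embeds H f hf A HA h2). intros k. apply h1.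
Qed.
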